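(* The function $f:(0,\infty)\to\mathbb{R}$, $f(z)=\frac{W(z)}{1+W(z)}$ (which equals $1-T_0(-z)$ where $T_0(z)=1/(1-T(z))$ and $T(z)=\sum_{n\ge1}n^{n-1}z^n/n!$, for small $z$), is a Bernstein function.
   Context: $W$ is the principal branch of Lambert's W function: the solution of $W(z)e^{W(z)}=z$ that is real and positive for $z>0$, with $W(z)=\sum_{n\ge1}(-n)^{n-1}z^n/n!$ near $0$. A $C^\infty$ function $g:(0,\infty)\to\mathbb{R}$ is completely monotonic if $(-1)^ng^{(n)}(z)\ge0$ for all $z>0$ and $n\ge0$; $f$ is a Bernstein function if $f$ is $C^\infty$, $f(z)>0$ for all $z>0$, and $f'$ is completely monotonic. *)

(* Defs.v *)
From Stdlib Require Import Reals ClassicalEpsilon.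
From Coquelicot Require Import Coquelicot.
Open Scope R_scope.

(* Principal branch of Lambert W on (0,oo): the unique real w > 0 with
   w * exp w = z (for z > 0).  Values for z <= 0 are irrelevant (unspecified). *)
Definition LambertW (z : R) : R :=
  epsilon (inhabits 0) (fun w => 0 < w /\ w * exp w = z).

Definition smooth_pos (g : R -> R) : Prop :=
  forall (n : nat) (z : R), 0 < z -> ex_derive_n g n z.

Definition completely_monotonic (g : R -> R) : Prop :=
  smooth_pos g /\
  forall (n : nat) (z : R), 0 < z -> 0 <= (-1) ^ n * Derive_n g n z.

Definition bernstein (f : R -> R) : Prop :=
  smooth_pos f /\ (forall z, 0 < z -> 0 < f z) /\ completely_monotonic (Derive f).

(* Main.v *)
Require Import Defs.
From Stdlib Require Import Reals Lra Psatz ClassicalEpsilon Ranalysis5 Factorial.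
From Coquelicot Require Import Coquelicot.
Open Scope R_scope.

Definition phi (w : R) := w * exp w.

Lemma phi_incr : forall x y, 0 <= x -> x < y -> phi x < phi y.
Proof.
  intros x y Hx Hxy; unfold phi.
  assert (exp x < exp y) by (apply exp_increasing; lra).
  assert (0 < exp x) by apply exp_pos.
  nra.
Qed.

Lemma W_spec z : 0 < z -> 0 < LambertW z /\ LambertW z * exp (LambertW z) = z.
Proof.
  intros Hz. unfold LambertW. apply epsilon_spec.
  assert (Hc : continuity (fun w => phi w - z)) by (unfold phi; intros x; reg).
  assert (H0 : (fun w => phi w - z) 0 < 0) by (unfold phi; simpl; lra).
  assert (H1 : 0 < (fun w => phi w - z) z).
  { unfold phi. assert (1 + z < exp z) by (apply exp_ineq1; lra). simpl; nra. }
  destruct (IVT (fun w => phi w - z) 0 z Hc Hz H0 H1) as [w [Hw1 Hw2]].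
  exists w. unfold phi in Hw2. split; [|lra].
  destruct Hw1 as [[H|H] _]; auto. subst. rewrite Rmult_0_l in Hw2. lra.
Qed.

Lemma W_pos z : 0 < z -> 0 < LambertW z.
Proof. intros; apply W_spec; auto. Qed.

Lemma W_phi z : 0 < z -> phi (LambertW z) = z.
Proof. intros; apply W_spec; auto. Qed.

Lemma W_of_phi w : 0 < w -> LambertW (phi w) = w.
Proof.
  intros Hw.
  assert (Hp : 0 < phi w) by (unfold phi; apply Rmult_lt_0_compat; auto; apply exp_pos).
  destruct (W_spec _ Hp) as [H1 H2]. fold (phi (LambertW (phi w))) in H2.
  destruct (Rtotal_order (LambertW (phi w)) w) as [H|[H|H]]; auto.
  - apply phi_incr in H; lra.
  - apply phi_incr in H; lra.
Qed.

Lemma W_mono x y : 0 < x -> x <= y -> LambertW x <= LambertW y.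
Proof.
  intros Hx Hxy. destruct (Rle_lt_dec (LambertW x) (LambertW y)) as [H|H]; auto.
  apply phi_incr in H; [|left; apply W_pos; lra].
  rewrite !W_phi in H; lra.
Qed.

Lemma W_deriv z : 0 < z ->
  is_derive LambertW z (/ (exp (LambertW z) * (1 + LambertW z))).
Proof.
  intros Hz. apply is_derive_Reals.
  assert (Hd : forall a, derivable_pt phi a).
  { intros a. unfold phi. reg. }
  assert (Hcont : continuity_pt LambertW z).
  { apply (continuity_pt_recip_interv phi LambertW (LambertW z / 2) (LambertW z + 1)).
    - assert (0 < LambertW z) by (apply W_pos; auto). lra.
    - intros x y Hx Hxy _. apply phi_incr; auto.
      assert (0 < LambertW z) by (apply W_pos; auto). lra.
    - intros x Hx _. unfold comp, id. apply W_phi.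
      eapply Rlt_le_trans; [|apply Hx]. unfold phi.
      assert (0 < LambertW z) by (apply W_pos; auto).
      apply Rmult_lt_0_compat; [lra|apply exp_pos].
    - intros x Hx1 Hx2.
      assert (0 < LambertW z) by (apply W_pos; auto).
      assert (0 < phi (LambertW z / 2)) by (unfold phi; apply Rmult_lt_0_compat; [lra|apply exp_pos]).
      split.
      + rewrite <- (W_of_phi (LambertW z / 2)) by lra. apply W_mono; lra.
      + rewrite <- (W_of_phi (LambertW z + 1)) by lra. apply W_mono; lra.
    - intros a _. apply derivable_continuous_pt, Hd.
    - assert (0 < LambertW z) by (apply W_pos; auto).
      rewrite <- (W_phi z) at 2 3 by auto. split; apply phi_incr; lra. }
  assert (Hi : LambertW (z/2) <= LambertW z <= LambertW (2*z)).
  { split; apply W_mono; lra. }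
  pose proof (derivable_pt_lim_recip_interv phi LambertW (z/2) (2*z) z (fun a _ => Hd a) Hcont
    ltac:(lra) ltac:(lra) Hi) as H.
  assert (Hval : derive_pt phi (LambertW z) (Hd (LambertW z)) = exp (LambertW z) * (1 + LambertW z)).
  { apply derive_pt_eq_0. unfold phi.
    replace (exp (LambertW z) * (1 + LambertW z)) with (1 * exp (LambertW z) + LambertW z * exp (LambertW z)) by ring.
    change (derivable_pt_lim (mult_fct id exp) (LambertW z) (1 * exp (LambertW z) + LambertW z * exp (LambertW z))).
    apply (derivable_pt_lim_mult id exp); [apply derivable_pt_lim_id|apply derivable_pt_lim_exp]. }
  cbv beta in H. rewrite Hval in H. unfold Rdiv in H. rewrite Rmult_1_l in H. apply H.
  - intros x Hx. unfold comp, id. apply W_phi. lra.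
  - assert (0 < LambertW z) by (apply W_pos; auto).
    apply Rgt_not_eq. apply Rmult_lt_0_compat; [apply exp_pos|lra].
Qed.

Fixpoint CMn (n : nat) (F : R -> R) : Prop :=
  match n with
  | O => forall z, 0 < z -> 0 <= F z
  | S m => (forall z, 0 < z -> 0 <= F z) /\
           exists G, (forall z, 0 < z -> is_derive F z (- G z)) /\ CMn m G
  end.

Lemma CMn_nonneg n F : CMn n F -> forall z, 0 < z -> 0 <= F z.
Proof. destruct n; simpl; tauto. Qed.

Lemma CMn_mono n : forall F, CMn (S n) F -> CMn n F.
Proof.
  induction n; intros F H.
  - exact (CMn_nonneg 1 F H).
  - destruct H as [H0 [G [HG HC]]]. split; auto. exists G; split; auto.
Qed.

Lemma CMn_plus n : forall F G, CMn n F -> CMn n G -> CMn n (fun z => F z + G z).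
Proof.
  induction n; intros F G HF HG.
  - intros z Hz. pose proof (HF z Hz); pose proof (HG z Hz); lra.
  - destruct HF as [HF0 [F1 [HF1 HFC]]]. destruct HG as [HG0 [G1 [HG1 HGC]]].
    split. { intros z Hz. pose proof (HF0 z Hz); pose proof (HG0 z Hz); lra. }
    exists (fun z => F1 z + G1 z). split; auto.
    intros z Hz. replace (- (F1 z + G1 z)) with (plus (- F1 z) (- G1 z)) by (unfold plus; simpl; ring).
    exact (is_derive_plus F G z _ _ (HF1 z Hz) (HG1 z Hz)).
Qed.

Lemma CMn_mult n : forall F G, CMn n F -> CMn n G -> CMn n (fun z => F z * G z).
Proof.
  induction n; intros F G HF HG.
  - intros z Hz. pose proof (HF z Hz); pose proof (HG z Hz); nra.
  - pose proof (CMn_mono _ _ HF) as HFm. pose proof (CMn_mono _ _ HG) as HGm.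
    destruct HF as [HF0 [F1 [HF1 HFC]]]. destruct HG as [HG0 [G1 [HG1 HGC]]].
    split. { intros z Hz. pose proof (HF0 z Hz); pose proof (HG0 z Hz); nra. }
    exists (fun z => F1 z * G z + F z * G1 z). split.
    + intros z Hz.
      replace (- (F1 z * G z + F z * G1 z)) with (plus (mult (- F1 z) (G z)) (mult (F z) (- G1 z))) by (unfold plus, mult; simpl; ring).
      exact (is_derive_mult F G z _ _ (HF1 z Hz) (HG1 z Hz) Rmult_comm).
    + apply CMn_plus; apply IHn; auto.
Qed.

Definition CMseq (gs : nat -> R -> R) : Prop :=
  forall k z, 0 < z -> 0 <= gs k z /\ is_derive (gs k) z (- gs (S k) z).

Lemma CMn_comp h H (Hh : forall z, 0 < z -> 0 < h z)
  (HH : forall z, 0 < z -> is_derive h z (H z)) :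
  forall n gs, CMseq gs -> CMn n H -> CMn (S n) (fun z => gs O (h z)).
Proof.
  induction n; intros gs Hg HC.
  - split. { intros z Hz. apply (Hg O _ (Hh z Hz)). }
    exists (fun z => gs 1%nat (h z) * H z). split.
    + intros z Hz. replace (- (gs 1%nat (h z) * H z)) with (scal (H z) (- gs 1%nat (h z))) by (unfold scal; simpl; unfold mult; simpl; ring).
      apply (is_derive_comp (gs O) h); auto. apply Hg; auto.
    + intros z Hz. pose proof (proj1 (Hg 1%nat _ (Hh z Hz))). pose proof (HC z Hz). nra.
  - split. { intros z Hz. apply (Hg O _ (Hh z Hz)). }
    exists (fun z => gs 1%nat (h z) * H z). split.
    + intros z Hz. replace (- (gs 1%nat (h z) * H z)) with (scal (H z) (- gs 1%nat (h z))) by (unfold scal; simpl; unfold mult; simpl; ring).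
      apply (is_derive_comp (gs O) h); auto. apply Hg; auto.
    + apply CMn_mult; auto.
      apply (IHn (fun k => gs (S k))).
      * intros k z Hz. apply Hg; auto.
      * apply CMn_mono; auto.
Qed.

Lemma derive_link F Hf (HF : forall z, 0 < z -> is_derive F z (Hf z)) :
  forall k z, 0 < z -> Derive_n F (S k) z = Derive_n Hf k z.
Proof.
  intros k z Hz. replace (S k) with (k + 1)%nat by lia. rewrite <- (Derive_n_comp F k 1).
  apply Derive_n_ext_loc.
  apply (locally_open (fun u => 0 < u)); [apply open_gt| |auto].
  intros x Hx. simpl. apply is_derive_unique; auto.
Qed.

Lemma ex_link F Hf (HF : forall z, 0 < z -> is_derive F z (Hf z)) :
  forall k z, 0 < z -> ex_derive_n Hf k z -> ex_derive_n F (S k) z.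
Proof.
  intros k z Hz Hex. destruct k.
  - simpl. eexists; apply HF; auto.
  - simpl. simpl in Hex.
    apply (ex_derive_ext_loc (Derive_n Hf k)); auto.
    apply (locally_open (fun u => 0 < u)); [apply open_gt| |auto].
    intros x Hx. symmetry. apply (derive_link F Hf HF k x Hx).
Qed.

Lemma CMn_derive n : forall F, CMn n F -> forall k z, (k <= n)%nat -> 0 < z ->
  ex_derive_n F k z /\ 0 <= (-1) ^ k * Derive_n F k z.
Proof.
  induction n; intros F HF k z Hk Hz.
  - assert (k = O) by lia. subst. simpl. split; auto. rewrite Rmult_1_l. apply HF; auto.
  - destruct k.
    + simpl. split; auto. rewrite Rmult_1_l. apply (CMn_nonneg _ _ HF); auto.
    + destruct HF as [HF0 [G [HG HC]]].
      assert (Hk' : (k <= n)%nat) by lia.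
      split.
      * apply (ex_link F (fun z => - G z) HG); auto.
        apply ex_derive_n_opp. apply (IHn G HC k z Hk' Hz).
      * rewrite (derive_link F (fun z => - G z) HG k z Hz). rewrite Derive_n_opp.
        destruct (IHn G HC k z Hk' Hz) as [_ H]. simpl. lra.
Qed.

Definition aseq (k : nat) (x : R) := INR (fact k) / (1 + x) ^ (S k).
Definition bseq (k : nat) (x : R) := exp (- x).

Lemma aseq_CM : CMseq aseq.
Proof.
  intros k z Hz. unfold aseq. split.
  - apply Rdiv_le_0_compat; [apply pos_INR|apply pow_lt; lra].
  - assert ((1+z)^k <> 0) by (apply pow_nonzero; lra).
    auto_derive.
    + apply Rmult_integral_contrapositive; split; lra.
    + rewrite fact_simpl, mult_INR. cbn [pow]. change (match k with 0%nat => 1 | S _ => INR k + 1 end) with (INR (S k)). field. lra.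
Qed.

Lemma bseq_CM : CMseq bseq.
Proof.
  intros k z Hz. unfold bseq. split.
  - left; apply exp_pos.
  - auto_derive; auto. ring.
Qed.

Definition Wd (z : R) := aseq O (LambertW z) * bseq O (LambertW z).

Lemma Wd_deriv z : 0 < z -> is_derive LambertW z (Wd z).
Proof.
  intros Hz. pose proof (W_pos z Hz).
  replace (Wd z) with (/ (exp (LambertW z) * (1 + LambertW z))).
  - apply W_deriv; auto.
  - unfold Wd, aseq, bseq. rewrite exp_Ropp. simpl. field.
    split; [apply Rgt_not_eq, exp_pos|lra].
Qed.

Lemma Wd_CM : forall n, CMn n Wd.
Proof.
  induction n.
  - intros z Hz. unfold Wd. pose proof (W_pos z Hz).
    apply Rmult_le_pos; [apply (aseq_CM O); auto|apply (bseq_CM O); auto].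
  - apply CMn_mult.
    + apply (CMn_comp LambertW Wd W_pos Wd_deriv n aseq aseq_CM IHn).
    + apply (CMn_comp LambertW Wd W_pos Wd_deriv n bseq bseq_CM IHn).
Qed.

Definition fW (z : R) := LambertW z / (1 + LambertW z).

Lemma f_deriv_CM n : exists G, (forall z, 0 < z -> is_derive fW z (G z)) /\ CMn n G.
Proof.
  destruct (CMn_comp LambertW Wd W_pos Wd_deriv n aseq aseq_CM (Wd_CM n)) as [_ [G [HG HC]]].
  exists G. split; auto.
  intros z Hz.
  apply (is_derive_ext_loc (fun y => 1 - aseq O (LambertW y))).
  - apply (locally_open (fun u => 0 < u)); [apply open_gt| |auto].
    intros x Hx. pose proof (W_pos x Hx). unfold fW, aseq. simpl. field. lra.
  - replace (G z) with (minus 0 (- G z)) by (unfold minus, plus, opp; simpl; ring).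
    exact (is_derive_minus (fun _ : R => 1) (fun y => aseq O (LambertW y)) z 0 (- G z)
      (is_derive_const (K:=R_AbsRing) (V:=R_NormedModule) 1 z) (HG z Hz)).
Qed.

Theorem mainTheorem10 :
  bernstein (fun z => LambertW z / (1 + LambertW z)).
Proof.
  change (bernstein fW).
  split; [|split].
  - intros n z Hz. destruct n; [simpl; auto|].
    destruct (f_deriv_CM n) as [G [HG HC]].
    apply (ex_link fW G HG); auto. apply (CMn_derive n G HC n z); auto.
  - intros z Hz. pose proof (W_pos z Hz). unfold fW. apply Rdiv_lt_0_compat; lra.
  - split.
    + intros n z Hz. destruct (f_deriv_CM n) as [G [HG HC]].
      apply (ex_derive_n_ext_loc G).
      * apply (locally_open (fun u => 0 < u)); [apply open_gt| |auto].
        intros x Hx. symmetry. apply is_derive_unique, HG; auto.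
      * apply (CMn_derive n G HC n z); auto.
    + intros n z Hz. destruct (f_deriv_CM n) as [G [HG HC]].
      rewrite (Derive_n_ext_loc (Derive fW) G).
      * apply (CMn_derive n G HC n z); auto.
      * apply (locally_open (fun u => 0 < u)); [apply open_gt| |auto].
        intros x Hx. apply is_derive_unique, HG; auto.
Qed.
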